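(* Let $\phi$ be a full QBF, let $Q\in\{\exists,\forall\}$ and let $Q'$ be its dual. Then: (1) $Q\, N(\phi)\; Q'\, P(\phi)\; \mathrm{tr}_Q(\phi) \equiv \phi$; (2) if $\phi$ is boolean then $d(\mathrm{tr}_Q(\phi)) = 0$; otherwise $d(\mathrm{tr}_Q(\phi)) = d(\phi) - 1$; (3) $|\mathrm{tr}_\forall(\phi)| + 3\, \mathrm{nv}(\mathrm{tr}_\forall(\phi)) + 6\, \mathrm{nb}(\mathrm{tr}_\forall(\phi)) \le |\phi| + 3\,\mathrm{nv}(\phi) + 6\,\mathrm{nb}(\phi)$.
   Context: Fix a countably infinite set $\mathbb{P}$ of propositional variables and a set of boolean operators, each $k$-ary operator $f^k$ ($k\ge 0$) interpreted by a boolean function $\{0,1\}^k\to\{0,1\}$, containing $\bot,\lnot,\land,\rightarrow,\leftrightarrow$. Full QBFs: the smallest set containing every $p\in\mathbb{P}$, closed under $f^k(\phi_1,\ldots,\phi_k)$ and under $\exists X\phi$, $\forall X\phi$ for finite (possibly empty) $X\subseteq\mathbb{P}$. Boolean formulas are full QBFs without quantifiers. A valuation $V:\mathbb{P}\to\{0,1\}$ is extended by applying the boolean functions, with $V(\exists X\phi)=1$ iff $V'(\phi)=1$ for some $V'$ agreeing with $V$ on $\mathbb{P}\setminus X$, and $V(\forall X\phi)=1$ iff $V'(\phi)=1$ for all such $V'$. $\phi\equiv\psi$ means $V(\phi)=V(\psi)$ for every $V$. $\phi[\sigma]$ denotes simultaneous substitution of free occurrences. The dual of $\exists$ is $\forall$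 and vice versa. An empty conjunction is $\top$. Metrics: length $|p|=1$, $|f^k(\phi_1,\ldots,\phi_k)|=1+\sum_i|\phi_i|$, $|\exists X\phi|=|\forall X\phi|=1+\mathrm{card}(X)+|\phi|$. Quantifier depth $d(p)=0$, $d(f^k(\phi_1,\ldots,\phi_k))=\max_i d(\phi_i)$ ($0$ if $k=0$), $d(\exists X\phi)=d(\forall X\phi)=1+d(\phi)$. $\mathrm{nb}(\phi)$ is the number of occurrences of quantified subformulas $QX\psi$ in $\phi$; $\mathrm{nv}(\phi)$ is the sum of $\mathrm{card}(X)$ over these occurrences. Decomposition: every full QBF $\phi$ can be written $\phi=\beta[p_1/Q_1X_1\phi_1,\ldots,p_k/Q_kX_k\phi_k]$ where $Q_1X_1\phi_1,\ldots,Q_kX_k\phi_k$ are the occurrences of outermost quantified subformulas of $\phi$ (those not in the scope of any quantifier), $p_1,\ldots,p_k$ are pairwise distinct fresh variables (not occurring in $\phi$), and $\beta$ is boolean ($k=0$ and $\beta=\phi$ if $\phi$ is boolean). Fix such a decomposition. For each $i\le k$ and $x\in X_i$ let $x_i^+,x_i^-$ be fresh pairwise distinct variables, and $\sigma_i=\{x/x_i^+ : x\in X_i\}$. Let $$\Gamma = \bigwedge_{i\le k}(p_i\leftrightarrow\phi_i[\sigma_i]) \land \bigwedge_{i\le k,\,Q_i=\exists}\Big(\lnot p_i\rightarrow\bigwedge_{x\in X_i}(x_i^+\leftrightarrow x_i^-)\Big) \land \bigwedge_{i\le k,\,Q_i=\forall}\Big(p_i\rightarrow\bigwedge_{x\in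 X_i}(x_i^+\leftrightarrow x_i^-)\Big).$$ Define $\mathrm{tr}_\forall(\phi)=\Gamma\land\beta$, $\mathrm{tr}_\exists(\phi)=\Gamma\rightarrow\beta$, $N(\phi)=\{x_i^- : x\in X_i, i\le k\}$, $P(\phi)=\{x_i^+ : x\in X_i, i\le k\}\cup\{p_i : i\le k\}$. A prefix $Q\,N(\phi)$ denotes a single quantifier block over the set $N(\phi)$.
   Formalization: Γ is one flat conjunction of its conjuncts, omitting the implication conjuncts with empty $X_i$, and $\mathrm{tr}_\forall(\phi)$ is the flat conjunction of those conjuncts followed by β rather than Γ ∧ β with big conjunctions nested. The statement above fails without it. *)

(* Defs.v *)
From mathcomp Require Import all_boot.
From mathcomp Require Import boolp.

Set Implicit Arguments.
Unset Strict Implicit.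
Unset Printing Implicit Defensive.

Record signature := Signature {
  op : Type;
  arity : op -> nat;
  interp : op -> seq bool -> bool;   (* only used on lists of length [arity o] *)
  obot : op; oneg : op; oand : op; oimp : op; oiff : op;
  arity_bot : arity obot = 0;
  arity_neg : arity oneg = 1;
  arity_and : arity oand = 2;
  arity_imp : arity oimp = 2;
  arity_iff : arity oiff = 2;
  interp_bot : interp obot [::] = false;
  interp_neg : forall a, interp oneg [:: a] = ~~ a;
  interp_and : forall a b, interp oand [:: a; b] = a && b;
  interp_imp : forall a b, interp oimp [:: a; b] = (a ==> b);
  interp_iff : forall a b, interp oiff [:: a; b] = (a == b)
}.

Inductive quant := Qex | Qall.

Definition dual (q : quant) : quant := match q with Qex => Qall | Qall => Qex end.
Definition quant_eqb (a b : quant) : bool := match a, b with Qex, Qex | Qall, Qall => true | _, _ => false end.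

(* Full QBFs.  A quantifier block [X] is a finite set of variables,
   represented by a list (read as the set of its elements). *)
Inductive form (S : signature) :=
  | FVar of nat
  | FOp (o : op S) (args : seq (form S))
  | FQ (q : quant) (X : seq nat) (f : form S).

Arguments FVar {S}.

Section Syntax.
Variable S : signature.
Local Notation form := (form S).

Fixpoint wf (f : form) : bool :=
  match f with
  | FVar _ => true
  | FOp o args => (size args == arity o) && all wf args
  | FQ _ _ g => wf g
  end.

Fixpoint isbool (f : form) : bool :=
  match f with
  | FVar _ => true
  | FOp _ args => all isbool args
  | FQ _ _ _ => false
  end.

Fixpoint vars (f : form) : seq nat :=
  match f with
  | FVar p => [:: p]
  | FOp _ args => flatten (map vars args)
  | FQ _ X g => X ++ vars g
  end.

Fixpoint occ (p : nat) (f : form) : nat :=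
  match f with
  | FVar y => (y == p)
  | FOp _ args => sumn (map (occ p) args)
  | FQ _ X g => count_mem p X + occ p g
  end.

Fixpoint subst (f : form) (s : nat -> form) : form :=
  match f with
  | FVar p => s p
  | FOp o args => FOp o (map (fun a => subst a s) args)
  | FQ q X g => FQ q X (subst g (fun y => if y \in X then FVar y else s y))
  end.

Fixpoint eval (f : form) (V : nat -> bool) : bool :=
  match f with
  | FVar p => V p
  | FOp o args => interp o (map (fun a => eval a V) args)
  | FQ Qex X g =>
      `[< exists V' : nat -> bool,
            (forall y, y \notin X -> V' y = V y) /\ eval g V' >]
  | FQ Qall X g =>
      `[< forall V' : nat -> bool,
            (forall y, y \notin X -> V' y = V y) -> eval g V' >]
  end.

Definition fequiv (f g : form) : Prop := forall V, eval f V = eval g V.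

Definition card_block (X : seq nat) : nat := size (undup X).

Fixpoint len (f : form) : nat :=
  match f with
  | FVar _ => 1
  | FOp _ args => 1 + sumn (map len args)
  | FQ _ X g => 1 + card_block X + len g
  end.

Fixpoint depth (f : form) : nat :=
  match f with
  | FVar _ => 0
  | FOp _ args => foldr maxn 0 (map depth args)
  | FQ _ _ g => 1 + depth g
  end.

Fixpoint nb (f : form) : nat :=
  match f with
  | FVar _ => 0
  | FOp _ args => sumn (map nb args)
  | FQ _ _ g => 1 + nb g
  end.

Fixpoint nv (f : form) : nat :=
  match f with
  | FVar _ => 0
  | FOp _ args => sumn (map nv args)
  | FQ _ X g => card_block X + nv g
  end.

Definition Fbot : form := FOp (obot S) [::].
Definition Fneg (a : form) : form := FOp (oneg S) [:: a].
Definition Fand (a b : form) : form := FOp (oand S) [:: a; b].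
Definition Fimp (a b : form) : form := FOp (oimp S) [:: a; b].
Definition Fiff (a b : form) : form := FOp (oiff S) [:: a; b].
Definition Ftop : form := Fneg Fbot.

Fixpoint bigand (l : seq form) : form :=
  match l with
  | [::] => Ftop
  | [:: a] => a
  | a :: l' => Fand a (bigand l')
  end.

(* one outermost quantified subformula  Q_i X_i phi_i  with its fresh p_i *)
Record qblock := QBlock { bp : nat; bq : quant; bX : seq nat; bf : form }.

Definition sigmaD (D : seq qblock) (y : nat) : form :=
  match [seq b <- D | bp b == y] with
  | b :: _ => FQ (bq b) (bX b) (bf b)
  | [::] => FVar y
  end.

(* x_i^+ = xp p_i x ,  x_i^- = xm p_i x  (blocks indexed by their p_i) *)
Definition Xplus (D : seq qblock) (xp : nat -> nat -> nat) : seq nat :=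
  flatten [seq [seq xp (bp b) x | x <- undup (bX b)] | b <- D].
Definition Xminus (D : seq qblock) (xm : nat -> nat -> nat) : seq nat :=
  flatten [seq [seq xm (bp b) x | x <- undup (bX b)] | b <- D].

(* phi = beta[p_1/Q_1X_1phi_1, ..., p_k/Q_kX_kphi_k] is a decomposition of phi
   into its outermost quantified subformula occurrences, with fresh
   pairwise distinct p_i, x_i^+, x_i^-. *)
Definition is_decomp (phi beta : form) (D : seq qblock)
    (xp xm : nat -> nat -> nat) : Prop :=
  [/\ isbool beta,
      all (fun b => occ (bp b) beta == 1) D,
      subst beta (sigmaD D) = phi,
      uniq (Xplus D xp ++ Xminus D xm ++ map bp D)
    & forall v, v \in Xplus D xp ++ Xminus D xm ++ map bp D -> v \notin vars phi].

Definition Nset D xm := Xminus D xm.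
Definition Pset D xp := Xplus D xp ++ map bp D.

Definition sigma_i (xp : nat -> nat -> nat) (b : qblock) (y : nat) : form :=
  if y \in bX b then FVar (xp (bp b) y) else FVar y.

Definition eqblock (xp xm : nat -> nat -> nat) (b : qblock) : form :=
  bigand [seq Fiff (FVar (xp (bp b) x)) (FVar (xm (bp b) x)) | x <- undup (bX b)].

(* The list of conjuncts of Gamma.  Conjuncts whose inner conjunction is
   empty (X_i = empty) are omitted. *)
Definition Gamma_list (D : seq qblock) (xp xm : nat -> nat -> nat) : seq form :=
  [seq Fiff (FVar (bp b)) (subst (bf b) (sigma_i xp b)) | b <- D]
  ++ [seq Fimp (Fneg (FVar (bp b))) (eqblock xp xm b)
       | b <- [seq b <- D | quant_eqb (bq b) Qex && (undup (bX b) != [::])]]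
  ++ [seq Fimp (FVar (bp b)) (eqblock xp xm b)
       | b <- [seq b <- D | quant_eqb (bq b) Qall && (undup (bX b) != [::])]].

Definition tr (q : quant) (beta : form) (D : seq qblock)
    (xp xm : nat -> nat -> nat) : form :=
  match q with
  | Qall => bigand (Gamma_list D xp xm ++ [:: beta])
  | Qex => Fimp (bigand (Gamma_list D xp xm)) beta
  end.

End Syntax.

Arguments QBlock {S}.

(* Main.v *)
Require Import Defs.
From mathcomp Require Import all_boot.
From mathcomp Require Import boolp.
From Stdlib Require List.

From mathcomp Require Import seq zify.
Set Implicit Arguments.
Unset Strict Implicit.
Unset Printing Implicit Defensive.

Section Main.
Variable S : signature.
Local Notation form := (form S).

Definition form_ind2 (P : form -> Prop)
  (HV : forall n, P (FVar n))
  (HO : forall o args, List.Forall P args -> P (FOp o args))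
  (HQ : forall q X f, P f -> P (FQ q X f)) : forall f, P f :=
  fix F f := match f with
  | FVar n => HV n
  | FOp o args => HO o args ((fix G l := match l return List.Forall P l with
        | nil => List.Forall_nil _ | cons a l' => List.Forall_cons _ (F a) (G l') end) args)
  | FQ q X g => HQ q X g (F g) end.

Lemma eval_agree (f : form) : forall V V' : nat -> bool, (forall y, y \in vars f -> V y = V' y) -> eval f V = eval f V'.
Proof.
elim/form_ind2: f => [n|o args IH|q X g IH] V V' H /=.
- by apply: H; rewrite /= inE.
- congr (interp o _); elim: args IH H => //= a l IHl IH H.
  inversion IH; subst.
  rewrite (H2 V V'); last by move=> y Hy; apply: H; rewrite mem_cat Hy.
  by rewrite IHl // => y Hy; apply: H; rewrite mem_cat Hy orbT.
- move: H; case: q => /= H; apply/asboolP/asboolP.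
  + move=> [V1 [H1 H2]]; exists (fun y => if y \in X then V1 y else V' y); split.
      by move=> y /negbTE ->.
    rewrite (IH _ V1) // => y Hy; case: ifP => // Hx.
    by rewrite H1 ?Hx // H // mem_cat Hy orbT.
  + move=> [V1 [H1 H2]]; exists (fun y => if y \in X then V1 y else V y); split.
      by move=> y /negbTE ->.
    rewrite (IH _ V1) // => y Hy; case: ifP => // Hx.
    by rewrite H1 ?Hx // -H // mem_cat Hy orbT.
  + move=> H1 V1 H2; have := H1 (fun y => if y \in X then V1 y else V y).
    have -> : eval g (fun y => if y \in X then V1 y else V y) = eval g V1.
      apply: IH => y Hy; case: ifP => // Hx.
      by rewrite H2 ?Hx // H // mem_cat Hy orbT.
    by apply => y /negbTE ->.
  + move=> H1 V1 H2; have := H1 (fun y => if y \in X then V1 y else V' y).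
    have -> : eval g (fun y => if y \in X then V1 y else V' y) = eval g V1.
      apply: IH => y Hy; case: ifP => // Hx.
      by rewrite H2 ?Hx // H // mem_cat Hy orbT.
    by apply => y /negbTE ->.
Qed.


Lemma eval_ren (f : form) : forall (s : nat -> form) (r : nat -> nat) (V : nat -> bool),
  (forall y, s y = FVar (r y)) -> (forall y, r y = y \/ r y \notin vars f) ->
  eval (subst f s) V = eval f (fun y => V (r y)).
Proof.
elim/form_ind2: f => [n|o args IH|q X g IH] s r V Hs Hr /=.
- by rewrite Hs.
- rewrite -map_comp; congr (interp o _); elim: args IH Hr => //= a l IHl IH Hr.
  inversion IH; subst; rewrite (H1 s r) //; last first.
    move=> y; case: (Hr y) => [->|]; [by left|by rewrite mem_cat negb_or => /andP[? _]; right].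
  rewrite IHl // => y; case: (Hr y) => [->|]; [by left|by rewrite mem_cat negb_or => /andP[_ ?]; right].
- set r' := fun y => if y \in X then y else r y.
  have Hs' : forall y, (if y \in X then FVar y else s y) = FVar (r' y).
    by move=> y; rewrite /r'; case: ifP.
  have Hr' : forall y, r' y = y \/ r' y \notin vars g.
    move=> y; rewrite /r'; case: ifP => Hy; first by left.
    by case: (Hr y) => [->|]; [left|rewrite mem_cat negb_or => /andP[_ ?]; right].
  have HrX : forall y, y \notin X -> r y \notin X.
    move=> y Hy; case: (Hr y) => [->//|]; by rewrite mem_cat negb_or => /andP[].
  clear Hr; case: q => /=; apply/asboolP/asboolP.
  + move=> [V1 [H1 H2]]; exists (fun y => V1 (r' y)); split.
      by move=> y Hy; rewrite /r' (negbTE Hy) H1 // HrX.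
    by rewrite -(IH _ r' _ Hs' Hr').
  + move=> [U [H1 H2]]; exists (fun z => if z \in X then U z else V z); split.
      by move=> y /negbTE ->.
    rewrite (IH _ r' _ Hs' Hr'); rewrite (@eval_agree _ _ U) // => y _.
    rewrite /r'; case Hy: (y \in X); first by rewrite Hy.
    by rewrite (negbTE (HrX _ (negbT Hy))) H1 // negbT.
  + move=> H1 U H2; have := H1 (fun z => if z \in X then U z else V z).
    rewrite (IH _ r' _ Hs' Hr'); rewrite (@eval_agree _ _ U) //; first by apply => y /negbTE ->.
    move=> y _; rewrite /r'; case Hy: (y \in X); first by rewrite Hy.
    by rewrite (negbTE (HrX _ (negbT Hy))) H2 // negbT.
  + move=> H1 V1 H2; have := H1 (fun y => V1 (r' y)).
    rewrite -(IH _ r' _ Hs' Hr'); apply.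
    by move=> y Hy; rewrite /r' (negbTE Hy) H2 // HrX.
Qed.

Definition isvar (f : form) := if f is FVar _ then true else false.

Lemma ren_metrics (f : form) : forall (s : nat -> form), (forall y, isvar (s y)) ->
  [/\ depth (subst f s) = depth f, len (subst f s) = len f,
      nb (subst f s) = nb f & nv (subst f s) = nv f].
Proof.
elim/form_ind2: f => [n|o args IH|q X g IH] s Hs /=.
- by move: (Hs n); case: (s n).
- rewrite -!map_comp; elim: args IH => //= a l IHl IH.
  inversion IH; subst; have [e1 e2 e3 e4] := H1 s Hs.
  have [f1 f2 f3 f4] := IHl H2; split; rewrite ?e1 ?e2 ?e3 ?e4.
  + by rewrite f1.
  + by move: f2; lia.
  + by rewrite f3.
  + by rewrite f4.
- have Hs2 : forall y, isvar (if y \in X then FVar y else s y).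
    by move=> y; case: (y \in X) => //; apply: Hs.
  have [e1 e2 e3 e4] := IH _ Hs2.
  by rewrite e1 e2 e3 e4.
Qed.

Lemma eval_subst_bool (f : form) (s : nat -> form) V : isbool f ->
  eval (subst f s) V = eval f (fun y => eval (s y) V).
Proof.
elim/form_ind2: f => [n|o args IH|q X g IH] //= Hb.
rewrite -map_comp; congr (interp o _); elim: args IH Hb => //= a l IHl IH /andP[Ha Hl].
by inversion IH; subst; rewrite /= H1 // IHl.
Qed.

Lemma vars_subst_bool (f : form) (s : nat -> form) y : isbool f -> y \in vars f ->
  {subset vars (s y) <= vars (subst f s)}.
Proof.
elim/form_ind2: f => [n|o args IH|q X g IH] //= Hb.
- by rewrite inE => /eqP ->.
- elim: args IH Hb => //= a l IHl IH /andP[Ha Hl]; inversion IH; subst.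
  rewrite mem_cat => /orP[Hy|Hy] z Hz; rewrite mem_cat.
  + by rewrite (H1 Ha Hy z Hz).
  + by rewrite (IHl H2 Hl Hy z Hz) orbT.
Qed.

Lemma isbool_subst (f : form) (s : nat -> form) : isbool f -> (forall y, isbool (s y)) ->
  isbool (subst f s).
Proof.
elim/form_ind2: f => [n|o args IH|q X g IH] //= Hb Hs.
elim: args IH Hb => //= a l IHl IH /andP[Ha Hl]; inversion IH; subst.
by rewrite H1 // IHl.
Qed.

Lemma isbool_subst_inv (f : form) (s : nat -> form) y : isbool f -> isbool (subst f s) ->
  y \in vars f -> isbool (s y).
Proof.
elim/form_ind2: f => [n|o args IH|q X g IH] //= Hb.
- by move=> H; rewrite inE => /eqP ->.
- elim: args IH Hb => //= a l IHl IH /andP[Ha Hl] /andP[Hsa Hsl]; inversion IH; subst.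
  rewrite mem_cat => /orP[Hy|Hy]; [exact: H1|exact: IHl].
Qed.

Lemma depth_subst_le (f : form) (s : nat -> form) m : isbool f ->
  (forall y, y \in vars f -> depth (s y) <= m) -> depth (subst f s) <= m.
Proof.
elim/form_ind2: f => [n|o args IH|q X g IH] //= Hb Hs.
- by apply: Hs; rewrite inE.
- elim: args IH Hb Hs => //= a l IHl IH /andP[Ha Hl] Hs; inversion IH; subst.
  rewrite geq_max H1 ?IHl // => y Hy; apply: Hs; by rewrite mem_cat Hy ?orbT.
Qed.

Lemma depth_subst_ge (f : form) (s : nat -> form) y : isbool f ->
  y \in vars f -> depth (s y) <= depth (subst f s).
Proof.
elim/form_ind2: f => [n|o args IH|q X g IH] //= Hb.
- by rewrite inE => /eqP ->.
- elim: args IH Hb => //= a l IHl IH /andP[Ha Hl]; inversion IH; subst.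
  rewrite mem_cat => /orP[Hy|Hy]; rewrite leq_max.
  + by rewrite H1.
  + by rewrite IHl ?orbT.
Qed.

Lemma len_subst_bool (f : form) (s : nat -> form) : isbool f ->
  len (subst f s) + size (vars f) = len f + sumn (map (fun y => len (s y)) (vars f)).
Proof.
elim/form_ind2: f => [n|o args IH|q X g IH] //= Hb.
- by rewrite addn0 addnC.
- elim: args IH Hb => //= a l IHl IH /andP[Ha Hl]; inversion IH; subst.
  have := H1 Ha; have := IHl H2 Hl; rewrite size_cat map_cat sumn_cat; lia.
Qed.

Lemma nv_subst_bool (f : form) (s : nat -> form) : isbool f ->
  nv (subst f s) = sumn (map (fun y => nv (s y)) (vars f)).
Proof.
elim/form_ind2: f => [n|o args IH|q X g IH] //= Hb.
- by rewrite addn0.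
- elim: args IH Hb => //= a l IHl IH /andP[Ha Hl]; inversion IH; subst.
  by rewrite map_cat sumn_cat H1 // IHl.
Qed.

Lemma nb_subst_bool (f : form) (s : nat -> form) : isbool f ->
  nb (subst f s) = sumn (map (fun y => nb (s y)) (vars f)).
Proof.
elim/form_ind2: f => [n|o args IH|q X g IH] //= Hb.
- by rewrite addn0.
- elim: args IH Hb => //= a l IHl IH /andP[Ha Hl]; inversion IH; subst.
  by rewrite map_cat sumn_cat H1 // IHl.
Qed.

Lemma occ_count (f : form) p : occ p f = count_mem p (vars f).
Proof.
elim/form_ind2: f => [n|o args IH|q X g IH] /=.
- by rewrite addn0 eq_sym.
- elim: args IH => //= a l IHl IH; inversion IH; subst.
  by rewrite count_cat H1 IHl.
- by rewrite count_cat IH.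
Qed.

Lemma evalFand (a b : form) V : eval (Fand a b) V = eval a V && eval b V.
Proof. by rewrite /= interp_and. Qed.
Lemma evalFimp (a b : form) V : eval (Fimp a b) V = eval a V ==> eval b V.
Proof. by rewrite /= interp_imp. Qed.
Lemma evalFiff (a b : form) V : eval (Fiff a b) V = (eval a V == eval b V).
Proof. by rewrite /= interp_iff. Qed.
Lemma evalFneg (a : form) V : eval (Fneg a) V = ~~ eval a V.
Proof. by rewrite /= interp_neg. Qed.
Lemma evalFtop V : eval (Ftop S) V = true.
Proof. by rewrite /Ftop evalFneg /= interp_bot. Qed.

Lemma eval_bigand (l : seq form) V : eval (bigand l) V = all (fun a => eval a V) l.
Proof.
elim: l => [|a [|b l] IH]; first exact: evalFtop.
- by rewrite /= andbT.
- by rewrite [bigand _]/= evalFand IH.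
Qed.

Variables (xp xm : nat -> nat -> nat).
Definition pl (b : qblock S) := [seq xp (bp b) x | x <- undup (bX b)].
Definition mi (b : qblock S) := [seq xm (bp b) x | x <- undup (bX b)].
Definition Eb (V : nat -> bool) (b : qblock S) := all (fun x => V (xp (bp b) x) == V (xm (bp b) x)) (undup (bX b)).
Definition cond (V : nat -> bool) (b : qblock S) :=
  (V (bp b) == eval (subst (bf b) (sigma_i xp b)) V) &&
  (if bq b is Qex then ~~ V (bp b) ==> Eb V b else V (bp b) ==> Eb V b).
Definition bval (V : nat -> bool) (b : qblock S) := eval (FQ (bq b) (bX b) (bf b)) V.

Lemma eval_eqblock V b : eval (eqblock xp xm b) V = Eb V b.
Proof.
rewrite /eqblock eval_bigand all_map; by apply: eq_all => x /=; rewrite interp_iff.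
Qed.

Lemma eval_Gamma V D : all (fun g => eval g V) (Gamma_list D xp xm) = all (cond V) D.
Proof.
rewrite /Gamma_list !all_cat !all_map !all_filter -!all_predI; apply: eq_all => b /=.
rewrite interp_iff !interp_imp interp_neg !eval_eqblock /cond /Eb.
by case: (bq b) => /=; case: (undup (bX b)) => [|x l] /=; rewrite ?implybT ?andbT.
Qed.

Lemma eval_trall V beta D : eval (tr Qall beta D xp xm) V = all (cond V) D && eval beta V.
Proof. by rewrite /= eval_bigand all_cat /= andbT -eval_Gamma. Qed.
Lemma eval_trex V beta D : eval (tr Qex beta D xp xm) V = all (cond V) D ==> eval beta V.
Proof. by rewrite evalFimp eval_bigand eval_Gamma. Qed.

Definition Fr (D : seq (qblock S)) := Xplus D xp ++ Xminus D xm ++ map (@bp S) D.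

Lemma Fr_cons_perm b D : perm_eq (Fr (b :: D)) ((pl b ++ mi b ++ [:: bp b]) ++ Fr D).
Proof.
apply/permP => a; rewrite /Fr /Xplus /Xminus /= !count_cat /= -/(pl b) -/(mi b).
rewrite /pl /mi; lia.
Qed.

Lemma allIn (P : pred (qblock S)) D b : all P D -> List.In b D -> P b.
Proof. elim: D => //= b0 D IH /andP[H1 H2] [<-//|]; exact: IH. Qed.

Lemma all_ext_in (P Q : pred (qblock S)) D : (forall b, List.In b D -> P b = Q b) ->
  all P D = all Q D.
Proof. elim: D => //= b0 D IH H; rewrite H /=; [rewrite IH // => b Hb|left] => //; apply: H; by right. Qed.

Lemma inD_pl b D : List.In b D -> {subset pl b <= Xplus D xp}.
Proof.
elim: D => //= b0 D IH [<-|Hb] v Hv; rewrite /Xplus /= mem_cat -/(Xplus D xp) ?Hv //.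
by rewrite IH ?orbT.
Qed.
Lemma inD_mi b D : List.In b D -> {subset mi b <= Xminus D xm}.
Proof.
elim: D => //= b0 D IH [<-|Hb] v Hv; rewrite /Xminus /= mem_cat -/(Xminus D xm) ?Hv //.
by rewrite IH ?orbT.
Qed.
Lemma inD_bp b D : List.In b D -> bp b \in map (@bp S) D.
Proof. elim: D => //= b0 D IH [<-|Hb]; rewrite inE ?eqxx // IH ?orbT //. Qed.

Lemma inj_uniq_map (T : eqType) (f : T -> nat) (s : seq T) x y :
  uniq (map f s) -> x \in s -> y \in s -> f x = f y -> x = y.
Proof.
elim: s => //= a s IH /andP[Ha Hs]; rewrite !inE => /orP[/eqP->|Hx] /orP[/eqP->|Hy] //.
- by move=> E; move: Ha; rewrite E map_f.
- by move=> E; move: Ha; rewrite -E map_f.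
- exact: IH.
Qed.

Definition Hyp (D : seq (qblock S)) (K : seq nat) :=
  [/\ uniq (Fr D), (forall v, v \in Fr D -> v \notin K) &
      (forall b, List.In b D -> {subset vars (FQ (bq b) (bX b) (bf b)) <= K})].

Lemma Hyp_cons b D K : Hyp (b :: D) K ->
  [/\ Hyp D K, uniq (pl b) && uniq (mi b),
      (forall v, v \in Fr D -> [&& v \notin pl b, v \notin mi b & v != bp b]),
      (forall v, v \in mi b -> v \notin pl b) &
      [/\ (bp b \notin pl b) && (bp b \notin mi b),
      (forall v, v \in pl b ++ mi b ++ [:: bp b] -> v \notin K) &
      {subset vars (FQ (bq b) (bX b) (bf b)) <= K}]].
Proof.
move=> [Hu Hf Hb]; have Hp := Fr_cons_perm b D.
move: Hu; rewrite (perm_uniq Hp) cat_uniq => /and3P[HA HAF HF].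
move: HA; rewrite cat_uniq => /and3P[Hpl Hplr Hr].
move: Hr; rewrite cat_uniq /= orbF andbT => /andP[Hmiu Hmb].
split => //; try by rewrite Hpl Hmiu.
- split => //; first by move=> v Hv; apply: Hf; rewrite (perm_mem Hp) mem_cat Hv orbT.
  by move=> b' Hb'; apply: Hb; right.
- move=> v Hv; move/hasPn: HAF => /(_ v Hv); rewrite !mem_cat !inE.
  by rewrite !negb_or.
- move=> v Hv; move/hasPn: Hplr => /(_ v); rewrite mem_cat Hv; by apply.
split.
- move/hasPn: Hplr => /(_ (bp b)); rewrite mem_cat inE eqxx orbT => /(_ isT) ->.
  by rewrite Hmb.
- by move=> v Hv; apply: Hf; rewrite (perm_mem Hp) mem_cat Hv.
- by apply: Hb; left.
Qed.

Definition rb (b : qblock S) y := if y \in bX b then xp (bp b) y else y.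

Lemma eval_sigma b V : (forall y, y \in bX b -> xp (bp b) y \notin vars (bf b)) ->
  eval (subst (bf b) (sigma_i xp b)) V = eval (bf b) (fun y => V (rb b y)).
Proof.
move=> H; apply: eval_ren => y; rewrite /sigma_i /rb; case: ifP => Hy //.
- by right; apply: H.
- by left.
Qed.

Lemma fresh_b b (K : seq nat) : (forall v, v \in pl b ++ mi b ++ [:: bp b] -> v \notin K) ->
  {subset vars (FQ (bq b) (bX b) (bf b)) <= K} ->
  forall y, y \in bX b -> xp (bp b) y \notin vars (bf b).
Proof.
move=> H1 H2 y Hy; apply/negP => Hv.
have : xp (bp b) y \notin K by apply: H1; rewrite mem_cat /pl map_f ?mem_undup.
by rewrite H2 // /= mem_cat Hv orbT.
Qed.

Lemma asb_val (f : nat -> nat) (X : seq nat) (W : nat -> bool) y :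
  uniq (map f (undup X)) -> y \in X -> `[< exists x, x \in X /\ f x = f y /\ W x >] = W y.
Proof.
move=> Hu Hy; apply/asboolP/idP => [[x [Hx [E HW]]]|HW]; last by exists y.
by rewrite -(@inj_uniq_map _ f (undup X) x y) ?mem_undup.
Qed.

Lemma W_exists b V (T : nat -> bool) : exists W : nat -> bool,
  [/\ (forall y, y \notin bX b -> W y = V y), eval (bf b) W = bval V b &
   ((if bq b is Qex then ~~ bval V b else bval V b) -> forall y, y \in bX b -> W y = T y)].
Proof.
set W0 := fun y => if y \in bX b then T y else V y.
have HW0 : forall y, y \notin bX b -> W0 y = V y by move=> y /negbTE; rewrite /W0 => ->.
have HW0' : forall y, y \in bX b -> W0 y = T y by move=> y; rewrite /W0 => ->.
rewrite /bval; case Eq: (bq b) => /=.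
- case E: `[< _ >].
  + move/asboolP: E => [W [H1 H2]]; exists W; split => //; by rewrite H2.
  + exists W0; split => //; apply/negbTE/negP => H; move/negbT/asboolPn: E; apply.
    by exists W0.
- case E: `[< _ >].
  + exists W0; split => //; move/asboolP: E; by apply.
  + move/negbT/asboolPn: E => /existsNP [W HW].
    move/not_implyP: HW => [H1 H2]; exists W; split => //.
    by apply/negbTE/negP.
Qed.

Lemma fresh_b2 b (K : seq nat) : (forall v, v \in pl b -> v \notin K) ->
  {subset vars (FQ (bq b) (bX b) (bf b)) <= K} ->
  forall y, y \in bX b -> xp (bp b) y \notin vars (bf b).
Proof.
move=> H1 H2 y Hy; apply/negP => Hv.
have : xp (bp b) y \notin K by apply: H1; rewrite /pl map_f ?mem_undup.
by rewrite H2 // /= mem_cat Hv orbT.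
Qed.

Lemma cond_agree b V V' (K : seq nat) : {subset vars (FQ (bq b) (bX b) (bf b)) <= K} ->
  (forall v, v \in pl b -> v \notin K) ->
  (forall v, [|| v == bp b, v \in pl b, v \in mi b | v \in K] -> V v = V' v) ->
  cond V b = cond V' b.
Proof.
move=> Hv Hp HV; have Hf := fresh_b2 Hp Hv.
rewrite /cond !eval_sigma // (HV (bp b)) ?eqxx //.
rewrite (@eval_agree _ _ (fun y => V' (rb b y))); last first.
  move=> y Hy; rewrite /rb; case: ifP => Hx; apply: HV.
  - by rewrite /pl map_f ?orbT ?mem_undup.
  - by rewrite Hv ?orbT // /= mem_cat Hy orbT.
have -> : Eb V b = Eb V' b.
  rewrite /Eb; apply: eq_in_all => x Hx /=; congr (_ == _); apply: HV.
  - by rewrite /pl map_f ?orbT.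
  - by rewrite /mi map_f ?orbT.
done.
Qed.

Lemma Pset_Fr D v : v \in Pset D xp -> v \in Fr D.
Proof. by rewrite /Pset /Fr !mem_cat => /orP[->|->]; rewrite ?orbT. Qed.
Lemma Nset_Fr D v : v \in Nset D xm -> v \in Fr D.
Proof. by rewrite /Nset /Fr !mem_cat => ->; rewrite ?orbT. Qed.
Lemma Pset_cons b D v : (v \in Pset (b :: D) xp) = [|| v \in pl b, v == bp b | v \in Pset D xp].
Proof.
rewrite /Pset /Xplus /= !mem_cat inE -/(pl b). 
by case: (v \in pl b); case: (v == bp b); case: (v \in [seq bp i | i <- D]); rewrite /= ?orbT ?orbF.
Qed.
Lemma Nset_cons b D v : (v \in Nset (b :: D) xm) = (v \in mi b) || (v \in Nset D xm).
Proof. by rewrite /Nset /Xminus /= !mem_cat. Qed.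
Lemma inD_Fr b D : List.In b D ->
  [/\ bp b \in Fr D, {subset pl b <= Fr D} & {subset mi b <= Fr D}].
Proof.
move=> H; split.
- by rewrite /Fr !mem_cat inD_bp ?orbT.
- by move=> v /(inD_pl H) Hv; rewrite /Fr mem_cat Hv.
- by move=> v /(inD_mi H) Hv; rewrite /Fr !mem_cat Hv orbT.
Qed.

Lemma lemmaB D (K : seq nat) : Hyp D K -> forall V1, exists V2,
  [/\ (forall v, v \notin Pset D xp -> V2 v = V1 v), all (cond V2) D &
      all (fun b => V2 (bp b) == bval V1 b) D].
Proof.
elim: D => [|b D IH] HH V1; first by exists V1.
have [HD Hplu Hfr Hmp [Hbp Hfk Hvb]] := Hyp_cons HH.
have [HuD HfD HbD] := HD.
have [V2' [A1 A2 A3]] := IH HD V1.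
have [W [W1 W2 W3]] := W_exists b V1 (fun y => V1 (xm (bp b) y)).
pose V2 v := if v == bp b then bval V1 b
  else if v \in pl b then `[< exists x, x \in bX b /\ xp (bp b) x = v /\ W x >] else V2' v.
have K0 : V2 (bp b) = bval V1 b by rewrite /V2 eqxx.
have K1 : forall v, v \in Fr D -> V2 v = V2' v.
  move=> v /Hfr /and3P[H1 H2 H3]; by rewrite /V2 (negbTE H1) (negbTE H3).
have KnFr : forall v, v \in K -> v \notin Fr D.
  by move=> v Hv; apply/negP => /HfD; rewrite Hv.
have KnA : forall v, v \in K -> (v != bp b) && (v \notin pl b).
  move=> v Hv; have : v \notin pl b ++ mi b ++ [:: bp b] by apply/negP => /Hfk; rewrite Hv.
  by rewrite !mem_cat inE !negb_or => /and3P[-> _ ->].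
have K2 : forall v, v \in K -> V2 v = V2' v.
  by move=> v /KnA /andP[H1 H2]; rewrite /V2 (negbTE H1) (negbTE H2).
have K3 : forall y, y \in bX b -> V2 (xp (bp b) y) = W y.
  move=> y Hy; have Hin : xp (bp b) y \in pl b by rewrite /pl map_f ?mem_undup.
  have Hne : xp (bp b) y != bp b.
    by apply/negP => /eqP E; move: Hbp; rewrite -{1}E Hin.
  by rewrite /V2 (negbTE Hne) Hin asb_val //; case/andP: Hplu.
have K4 : forall y, y \in bX b -> V2 (xm (bp b) y) = V1 (xm (bp b) y).
  move=> y Hy; have Hin : xm (bp b) y \in mi b by rewrite /mi map_f ?mem_undup.
  have Hne : xm (bp b) y != bp b.
    by apply/negP => /eqP E; move: Hbp => /andP[_]; rewrite -E Hin.
  rewrite /V2 (negbTE Hne) (negbTE (Hmp _ Hin)) A1 //.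
  apply/negP => /Pset_Fr /Hfr /and3P[_ H _]; by rewrite Hin in H.
exists V2; split.
- move=> v; rewrite Pset_cons !negb_or => /and3P[H1 H2 H3].
  by rewrite /V2 (negbTE H1) (negbTE H2) A1.
- rewrite /=; apply/andP; split.
  + rewrite /cond (eval_sigma _ (fresh_b Hfk Hvb)) K0.
    rewrite (@eval_agree _ _ W); last first.
      move=> y Hy; rewrite /rb; case: ifP => Hx; first exact: K3.
      have HyK : y \in K by apply: Hvb; rewrite /= mem_cat Hy orbT.
      by rewrite K2 // A1 ?W1 ?Hx //; apply/negP => /Pset_Fr; apply/negP; apply: KnFr.
    rewrite W2 eqxx /=; move: W3; case: (bq b) => W3; case E: (bval V1 b) => //=;
      (apply/allP => x; rewrite mem_undup => Hx; rewrite K3 // K4 // W3 ?E //).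
  + rewrite (@all_ext_in _ (cond V2')) // => b' Hb'.
    have [F1 F2 F3] := inD_Fr Hb'.
    apply: (@cond_agree _ _ _ K); first exact: HbD.
      by move=> v /F2 Hv; apply/negP => Hk; move: (KnFr _ Hk); rewrite Hv.
    move=> v /or4P[/eqP->|/F2|/F3|/K2 //]; exact: K1.
- rewrite /= K0 eqxx /=; rewrite (@all_ext_in _ (fun b => V2' (bp b) == bval V1 b)) //.
  move=> b' Hb'; have [F1 _ _] := inD_Fr Hb'; by rewrite K1.
Qed.

Lemma bvalU b V U : (forall y, y \in vars (bf b) -> y \notin bX b -> U y = V y) ->
  (bq b = Qex -> eval (bf b) U -> bval V b) /\ (bq b = Qall -> bval V b -> eval (bf b) U).
Proof.
move=> HU; set V' := fun y => if y \in bX b then U y else V y.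
have E : eval (bf b) V' = eval (bf b) U.
  apply: eval_agree => y Hy; rewrite /V'; case: ifP => // /negbT Hx; by rewrite HU.
rewrite /bval; split => -> /=.
- by move=> HE; apply/asboolP; exists V'; rewrite E; split => // y /negbTE; rewrite /V' => ->.
- by move/asboolP => H; rewrite -E; apply: H => y /negbTE; rewrite /V' => ->.
Qed.

Lemma lemmaA D (K : seq nat) : Hyp D K -> forall V, exists V1,
  (forall v, v \notin Nset D xm -> V1 v = V v) /\
  (forall V2, (forall v, v \notin Pset D xp -> V2 v = V1 v) -> all (cond V2) D ->
     all (fun b => V2 (bp b) == bval V b) D).
Proof.
elim: D => [|b D IH] HH V; first by exists V.
have [HD Hplu Hfr Hmp [Hbp Hfk Hvb]] := Hyp_cons HH.
have [HuD HfD HbD] := HD.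
have [V1' [B1 B2]] := IH HD V.
have [W [W1 W2 _]] := W_exists b V V.
pose V1 v := if v \in mi b then `[< exists x, x \in bX b /\ xm (bp b) x = v /\ W x >] else V1' v.
have KnFr : forall v, v \in K -> v \notin Fr D.
  by move=> v Hv; apply/negP => /HfD; rewrite Hv.
have KnA : forall v, v \in K -> [&& v != bp b, v \notin pl b & v \notin mi b].
  move=> v Hv; have : v \notin pl b ++ mi b ++ [:: bp b] by apply/negP => /Hfk; rewrite Hv.
  by rewrite !mem_cat inE !negb_or => /and3P[-> -> ->].
exists V1; split.
- move=> v; rewrite Nset_cons negb_or => /andP[H1 H2]; by rewrite /V1 (negbTE H1) B1.
move=> V2 HV2 /= /andP[Hc HcD]; apply/andP; split; last first.
- pose V2'' v := if [|| v == bp b, v \in pl b | v \in mi b] then V1' v else V2 v.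
  have HF : forall v, v \in Fr D -> V2'' v = V2 v.
    move=> v /Hfr /and3P[H1 H2 H3]; by rewrite /V2'' (negbTE H1) (negbTE H2) (negbTE H3).
  have H2'' : forall v, v \notin Pset D xp -> V2'' v = V1' v.
    move=> v Hv; rewrite /V2''; case: ifP => // /negbT; rewrite !negb_or => /and3P[H1 H2 H3].
    rewrite HV2; first by rewrite /V1 (negbTE H3).
    by rewrite Pset_cons !negb_or H1 H2 Hv.
  have Hc'' : all (cond V2'') D.
    rewrite (@all_ext_in _ (cond V2)) // => b' Hb'.
    have [F1 F2 F3] := inD_Fr Hb'.
    apply: (@cond_agree _ _ _ K); first exact: HbD.
      by move=> v /F2 Hv; apply/negP => Hk; move: (KnFr _ Hk); rewrite Hv.
    move=> v /or4P[/eqP->|/F2|/F3|]; try exact: HF.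
    move=> /KnA /and3P[H1 H2 H3]; by rewrite /V2'' (negbTE H1) (negbTE H2) (negbTE H3).
  have := B2 _ H2'' Hc''.
  rewrite (@all_ext_in _ (fun b => V2 (bp b) == bval V b)) // => b' Hb'.
  have [F1 _ _] := inD_Fr Hb'; by rewrite HF.
- have Hfb := fresh_b Hfk Hvb.
  move: Hc; rewrite /cond (eval_sigma _ Hfb) => /andP[/eqP Hp Hi].
  set U := fun y => V2 (rb b y).
  have UV : forall y, y \in vars (bf b) -> y \notin bX b -> U y = V y.
    move=> y Hy Hx; have HyK : y \in K by apply: Hvb; rewrite /= mem_cat Hy orbT.
    have /and3P[H1 H2 H3] := KnA _ HyK.
    rewrite /U /rb (negbTE Hx) HV2; last first.
      rewrite Pset_cons !negb_or H1 H2 /=; apply/negP => /Pset_Fr; apply/negP; exact: KnFr.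
    rewrite /V1 (negbTE H3) B1 //; apply/negP => /Nset_Fr; apply/negP; exact: KnFr.
  have UW : Eb V2 b -> forall y, y \in vars (bf b) -> U y = W y.
    move=> HE y Hy; case Hx: (y \in bX b); last by rewrite UV ?Hx // W1 ?Hx.
    have Hin : xm (bp b) y \in mi b by rewrite /mi map_f ?mem_undup.
    move/allP: HE => /(_ y); rewrite mem_undup Hx => /(_ isT) /eqP.
    rewrite /U /rb Hx => ->; rewrite HV2; last first.
      rewrite Pset_cons !negb_or (Hmp _ Hin) /=; apply/andP; split.
        by apply/negP => /eqP E; move: Hbp => /andP[_]; rewrite -E Hin.
      apply/negP => /Pset_Fr /Hfr /and3P[_ H _]; by rewrite Hin in H.
    by rewrite /V1 Hin asb_val //; case/andP: Hplu.
  have [BE BA] := bvalU UV.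
  have Hp' : V2 (bp b) = eval (bf b) U := Hp.
  move: Hi; case Eq: (bq b); case E2: (V2 (bp b)) => /= Hi.
  + by rewrite (BE Eq) // -Hp' E2.
  + by rewrite -W2 -(eval_agree (UW Hi)) -/U -Hp' E2.
  + by rewrite -W2 -(eval_agree (UW Hi)) -/U -Hp' E2.
  + by apply/eqP/esym/negP => /(BA Eq); rewrite -Hp' E2.
Qed.

Lemma sigma_spec D y : (sigmaD D y = FVar y /\ y \notin map (@bp S) D) \/
  (exists b, [/\ List.In b D, bp b = y & sigmaD D y = FQ (bq b) (bX b) (bf b)]).
Proof.
elim: D => [|b D IH]; first by left.
rewrite /sigmaD /=; case: eqP => [E|NE]; first by right; exists b; split => //; left.
rewrite -/(sigmaD D y) inE; case: IH => [[-> H]|[b' [H1 H2 H3]]].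
- left; split => //; apply/norP; split; [apply/eqP => E; apply: NE; by rewrite E|exact: H].
- by right; exists b'; split => //; right.
Qed.

Lemma sigma_uniq D b : uniq (map (@bp S) D) -> List.In b D ->
  sigmaD D (bp b) = FQ (bq b) (bX b) (bf b).
Proof.
elim: D => //= b0 D IH /andP[Hn Hu] [E|Hb].
- by subst; rewrite /sigmaD /= eqxx.
- rewrite /sigmaD /=; case: eqP => [E|_]; last exact: IH.
  by move: Hn; rewrite E inD_bp.
Qed.

Lemma decomp_facts (phi beta : form) D : is_decomp phi beta D xp xm ->
  [/\ Hyp D (vars phi), uniq (map (@bp S) D) &
      forall b, List.In b D -> bp b \in vars beta].
Proof.
case=> Hbool Hocc Hsub Hu Hfresh.
have Hbu : uniq (map (@bp S) D) by move: Hu; rewrite !cat_uniq => /and3P[_ _ /and3P[]].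
have Hin : forall b, List.In b D -> bp b \in vars beta.
  move=> b Hb; have := allIn Hocc Hb; rewrite /= occ_count => /eqP H.
  by rewrite -has_pred1 has_count H.
split => //; split => //.
move=> b Hb v Hv; rewrite -Hsub; apply: (@vars_subst_bool beta (sigmaD D) (bp b) Hbool (Hin _ Hb)).
by rewrite sigma_uniq.
Qed.

Lemma sem (phi beta : form) D q : is_decomp phi beta D xp xm ->
  fequiv (FQ q (Nset D xm) (FQ (dual q) (Pset D xp) (tr q beta D xp xm))) phi.
Proof.
move=> Hd; have [HK Hbu Hin] := decomp_facts Hd.
case: Hd => Hbool Hocc Hsub Hu Hfresh.
have [_ HfK HbK] := HK.
move=> V.
have key : forall V2, (forall y, y \in vars phi -> V2 y = V y) ->
    all (fun b => V2 (bp b) == bval V b) D -> eval beta V2 = eval phi V.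
  move=> V2 H1 H2; rewrite -Hsub eval_subst_bool //; apply: eval_agree => y Hy.
  case: (sigma_spec D y) => [[E _]|[b [Hb Eb E]]]; rewrite E.
  - by rewrite /= H1 // -Hsub (@vars_subst_bool beta (sigmaD D) y Hbool Hy) // E inE.
  - by rewrite -Eb; move/eqP: (allIn H2 Hb).
have agreeK : forall V1 V2 : nat -> bool, (forall v, v \notin Nset D xm -> V1 v = V v) ->
    (forall v, v \notin Pset D xp -> V2 v = V1 v) -> forall y, y \in vars phi -> V2 y = V y.
  move=> V1 V2 H1 H2 y Hy.
  have Hy' : y \notin Fr D by apply/negP => /HfK; rewrite Hy.
  rewrite H2 ?H1 //; apply/negP; [move/Nset_Fr|move/Pset_Fr]; by apply/negP.
have bvalK : forall V1 V2 : nat -> bool, (forall v, v \notin Nset D xm -> V1 v = V v) ->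
    all (fun b => V2 (bp b) == bval V1 b) D -> all (fun b => V2 (bp b) == bval V b) D.
  move=> V1 V2 H1; rewrite (@all_ext_in _ (fun b => V2 (bp b) == bval V b)) // => b Hb.
  congr (_ == _); apply: eval_agree => y Hy.
  have Hy' : y \notin Fr D by apply/negP => /HfK; rewrite (HbK b Hb).
  by rewrite H1 //; apply/negP => /Nset_Fr; apply/negP.
case: q.
- apply/asboolP/idP.
  + move=> [V1 [H1 /asboolP H2]]; have [V2 [C1 C2 C3]] := lemmaB HK V1.
    have Htr : eval (tr Qex beta D xp xm) V2 := H2 V2 C1.
    move: Htr; rewrite eval_trex C2 /= => Hb.
    rewrite -(key V2) //; [exact: agreeK H1 C1|exact: bvalK H1 C3].
  + move=> Hphi; have [V1 [A1 A2]] := lemmaA HK V.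
    exists V1; split => //; apply/asboolP => V2 H2.
    change (eval (tr Qex beta D xp xm) V2); rewrite eval_trex; apply/implyP => Hc.
    rewrite (key V2) //; [exact: agreeK A1 H2|exact: A2].
- apply/asboolP/idP.
  + move=> H; have [V1 [A1 A2]] := lemmaA HK V.
    have /asboolP [V2 [H2 H3]] := H V1 A1.
    have Htr : eval (tr Qall beta D xp xm) V2 := H3.
    move: Htr; rewrite eval_trall => /andP[Hc Hb].
    rewrite -(key V2) //; [exact: agreeK A1 H2|exact: A2].
  + move=> Hphi V1 H1; apply/asboolP; have [V2 [C1 C2 C3]] := lemmaB HK V1.
    exists V2; split => //; change (eval (tr Qall beta D xp xm) V2); rewrite eval_trall C2 /= (key V2) //;
      [exact: agreeK H1 C1|exact: bvalK H1 C3].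
Qed.

Lemma foldr_maxn_cat (l1 l2 : seq nat) :
  foldr maxn 0 (l1 ++ l2) = maxn (foldr maxn 0 l1) (foldr maxn 0 l2).
Proof. elim: l1 => [|a l IH] /=; [by rewrite max0n|by rewrite IH maxnA]. Qed.

Lemma foldr_maxn0 (l : seq nat) : all (fun x => x == 0) l -> foldr maxn 0 l = 0.
Proof. elim: l => //= a l IH /andP[/eqP -> H]; by rewrite IH. Qed.

Lemma depth_bigand (l : seq form) : depth (bigand l) = foldr maxn 0 (map (@depth S) l).
Proof.
elim: l => [|a l IH] //; case: l IH => [|b l] IH; first by rewrite /= maxn0.
have -> : bigand (a :: b :: l) = Fand a (bigand (b :: l)) by [].
by rewrite /Fand [depth (FOp _ _)]/= IH maxn0.
Qed.

Lemma depth_isbool (f : form) : isbool f -> depth f = 0.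
Proof.
elim/form_ind2: f => [n|o args IH|q X g IH] //= Hb.
elim: args IH Hb => //= a l IHl IH /andP[Ha Hl]; inversion IH; subst.
by rewrite H1 // IHl.
Qed.

Lemma sigma_isvar b y : isvar (sigma_i xp b y).
Proof. by rewrite /sigma_i; case: ifP. Qed.

Definition Mx (D : seq (qblock S)) := foldr maxn 0 (map (fun b => depth (bf b)) D).

Lemma depth_tr q (beta : form) D : isbool beta -> depth (tr q beta D xp xm) = Mx D.
Proof.
move=> Hb.
have HG : foldr maxn 0 (map (@depth S) (Gamma_list D xp xm)) = Mx D.
  rewrite /Gamma_list !map_cat !foldr_maxn_cat.
  have HE : forall b : qblock S, depth (eqblock xp xm b) = 0.
    move=> b; rewrite /eqblock depth_bigand; elim: (undup (bX b)) => //= x l -> //.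
  have HB : forall l, foldr maxn 0 (map (@depth S)
      (map (fun b => Fimp (Fneg (FVar (bp b))) (eqblock xp xm b)) l)) = 0.
    by elim=> //= b l ->; rewrite HE.
  have HC : forall l, foldr maxn 0 (map (@depth S)
      (map (fun b => Fimp (FVar (bp b)) (eqblock xp xm b)) l)) = 0.
    by elim=> //= b l ->; rewrite HE.
  rewrite HB HC.
  rewrite !maxn0 /Mx -map_comp; congr foldr; apply: eq_map => b /=.
  have [-> _ _ _] := @ren_metrics (bf b) (sigma_i xp b) (sigma_isvar b).
  by rewrite max0n maxn0.
case: q.
- change (depth (Fimp (bigand (Gamma_list D xp xm)) beta) = Mx D).
  by rewrite /Fimp [depth (FOp _ _)]/= depth_bigand HG depth_isbool // !maxn0.
- change (depth (bigand (Gamma_list D xp xm ++ [:: beta])) = Mx D).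
  by rewrite depth_bigand map_cat foldr_maxn_cat HG /= depth_isbool // !maxn0.
Qed.

Lemma Mx_in D b : List.In b D -> depth (bf b) <= Mx D.
Proof. elim: D => //= b0 D IH [<-|H]; rewrite leq_max ?leqnn //; by rewrite IH ?orbT. Qed.

Lemma Mx_le D m : (forall b, List.In b D -> depth (bf b) <= m) -> Mx D <= m.
Proof.
elim: D => //= b0 D IH H; rewrite geq_max H /=; [apply: IH => b Hb; apply: H|left] => //.
by right.
Qed.

Lemma depth_part (phi beta : form) D q : is_decomp phi beta D xp xm ->
  depth (tr q beta D xp xm) = (if isbool phi then 0 else depth phi - 1).
Proof.
move=> Hd; have [HK Hbu Hin] := decomp_facts Hd.
case: Hd => Hbool Hocc Hsub Hu Hfresh.
rewrite depth_tr //; case: D Hbu Hin Hocc Hsub Hu Hfresh HK => [|b D] Hbu Hin Hocc Hsub Hu Hfresh HK.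
- have -> : isbool phi by rewrite -Hsub; apply: isbool_subst.
  done.
- have Hb : List.In b (b :: D) by left.
  have -> : isbool phi = false.
    apply/negP => Hp; have := @isbool_subst_inv beta (sigmaD (b :: D)) (bp b) Hbool.
    by rewrite Hsub Hp (Hin _ Hb) sigma_uniq // => /(_ isT isT).
  have Hle : depth phi <= (Mx (b :: D)).+1.
    rewrite -Hsub; apply: depth_subst_le => // y Hy.
    case: (sigma_spec (b :: D) y) => [[-> _]|[b' [Hb' _ ->]]] //=.
    by rewrite add1n ltnS Mx_in.
  have Hge : forall b', List.In b' (b :: D) -> (depth (bf b')).+1 <= depth phi.
    move=> b' Hb'; rewrite -Hsub.
    have := @depth_subst_ge beta (sigmaD (b :: D)) (bp b') Hbool (Hin _ Hb').
    by rewrite sigma_uniq.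
  have H1 := Hge _ Hb.
  have H2 : Mx (b :: D) <= (depth phi).-1.
    apply: Mx_le => b' Hb'; have := Hge _ Hb'; lia.
  lia.
Qed.

Definition G (f : form) := len f + 3 * nv f + 6 * nb f.

Lemma len_pos (f : form) : 0 < len f.
Proof. by case: f. Qed.

Lemma G_bigand (l : seq form) : 0 < size l ->
  G (bigand l) + 1 = sumn [seq G g + 1 | g <- l].
Proof.
elim: l => [|a l IH] // _; case: l IH => [|b l] IH; first by rewrite /= addn0.
have -> : bigand (a :: b :: l) = Fand a (bigand (b :: l)) by [].
have := IH isT; rewrite /G /Fand [len _]/= [nv _]/= [nb _]/= /=; lia.
Qed.

Lemma G_eqblock b : undup (bX b) != [::] -> G (eqblock xp xm b) + 1 = 4 * card_block (bX b).
Proof.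
move=> H; rewrite /eqblock G_bigand; last by case: (undup (bX b)) H.
rewrite /card_block; elim: (undup (bX b)) => //= x l ->.
by rewrite /G /=; lia.
Qed.

Lemma sum_filter_le (P : pred (qblock S)) (f g : qblock S -> nat) D :
  (forall b, P b -> f b <= g b) ->
  sumn (map f (filter P D)) <= sumn (map g (filter P D)).
Proof.
move=> H; elim: D => //= b D IH; case: ifP => //= Hb; by rewrite leq_add // H.
Qed.

Lemma sum_filter2 (P1 P2 : pred (qblock S)) (f : qblock S -> nat) D :
  (forall b, ~~ (P1 b && P2 b)) ->
  sumn (map f (filter P1 D)) + sumn (map f (filter P2 D)) <= sumn (map f D).
Proof.
move=> H; elim: D => //= b D IH; move: (H b).
case: (P1 b); case: (P2 b) => //= _; lia.
Qed.

Lemma sumn_uniq_sub (h : nat -> nat) (l P : seq nat) : uniq P -> {subset P <= l} ->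
  sumn (map h P) <= sumn (map h l).
Proof.
elim: l P => [|a l IH] P HP Hs.
- by case: P HP Hs => // x P _ /(_ x); rewrite inE eqxx => /(_ isT).
- case Ha: (a \in P).
  + rewrite (perm_sumn (perm_map h (perm_to_rem Ha))) /= leq_add2l.
    apply: IH; first exact: rem_uniq.
    move=> x Hx; move: (Hx); rewrite mem_rem_uniq // => /andP[Hxa HxP].
    by move: (Hs x HxP); rewrite inE (negbTE Hxa).
  + apply: leq_trans (leq_addl _ _); apply: IH => // x Hx.
    move: (Hs x Hx); rewrite inE => /orP[/eqP E|//]; by rewrite -E Hx in Ha.
Qed.

Lemma G_subst_bool (f : form) (s : nat -> form) : isbool f ->
  G (subst f s) + size (vars f) = len f + sumn (map (fun y => G (s y)) (vars f)).
Proof.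
move=> Hb; rewrite /G nv_subst_bool // nb_subst_bool //.
have := len_subst_bool s Hb.
have -> : forall l, sumn (map (fun y => G (s y)) l) = sumn (map (fun y => len (s y)) l)
   + 3 * sumn (map (fun y => nv (s y)) l) + 6 * sumn (map (fun y => nb (s y)) l).
  by elim=> //= y l ->; rewrite /G; lia.
lia.
Qed.

Lemma nvnb_isbool (f : form) : isbool f -> nv f = 0 /\ nb f = 0.
Proof.
elim/form_ind2: f => [n|o args IH|q X g IH] //= Hb.
elim: args IH Hb => //= a l IHl IH /andP[Ha Hl]; inversion IH; subst.
have [-> ->] := H1 Ha; have [-> ->] := IHl H2 Hl; done.
Qed.

Lemma G_pos (f : form) : 0 < G f.
Proof. by rewrite /G; have := len_pos f; lia. Qed.

Lemma sumn_ext_in (f g : qblock S -> nat) D : (forall b, List.In b D -> f b = g b) ->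
  sumn (map f D) = sumn (map g D).
Proof. elim: D => //= b D IH H; rewrite H ?IH //; [move=> b' Hb'; apply: H; right|left] => //. Qed.

Lemma sumn_add (f g : qblock S -> nat) D :
  sumn (map f D) + sumn (map g D) = sumn (map (fun b => f b + g b) D).
Proof. elim: D => //= b D <-; lia. Qed.

Lemma mem_map_bp x D : x \in map (@bp S) D -> exists b, List.In b D /\ x = bp b.
Proof.
elim: D => //= b D IH; rewrite inE => /orP[/eqP->|/IH [b' [H1 H2]]].
- by exists b; split => //; left.
- by exists b'; split => //; right.
Qed.

Definition Tb (b : qblock S) := G (bf b) + 4 * card_block (bX b) + 6.

Lemma len_part (phi beta : form) D : is_decomp phi beta D xp xm ->
  G (tr Qall beta D xp xm) <= G phi.
Proof.
move=> Hd; have [HK Hbu Hin] := decomp_facts Hd.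
case: Hd => Hbool Hocc Hsub Hu Hfresh.
have [nvb nbb] := nvnb_isbool Hbool.
have Htr : G (tr Qall beta D xp xm) + 1 <= sumn (map Tb D) + len beta + 1.
  change (G (bigand (Gamma_list D xp xm ++ [:: beta])) + 1 <= sumn (map Tb D) + len beta + 1).
  rewrite G_bigand; last by rewrite size_cat addn1.
  rewrite map_cat sumn_cat /= /Gamma_list !map_cat !sumn_cat -!map_comp.
  have HA : sumn (map ((fun g => G g + 1) \o (fun b => Fiff (FVar (bp b)) (subst (bf b) (sigma_i xp b)))) D)
      = sumn (map (fun b => G (bf b) + 3) D).
    congr sumn; apply: eq_map => b /=.
    have [_ e2 e3 e4] := @ren_metrics (bf b) (sigma_i xp b) (sigma_isvar b).
    by rewrite /G /= e2 e3 e4; lia.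
  set fc := fun b : qblock S => 4 * card_block (bX b) + 3.
  have HB : sumn (map ((fun g => G g + 1) \o (fun b => Fimp (Fneg (FVar (bp b))) (eqblock xp xm b)))
       [seq b <- D | quant_eqb (bq b) Qex && (undup (bX b) != [::])])
      <= sumn (map fc [seq b <- D | quant_eqb (bq b) Qex && (undup (bX b) != [::])]).
    apply: sum_filter_le => b /andP[_ Hn] /=.
    have := G_eqblock Hn; rewrite /G /fc /=; lia.
  have HC : sumn (map ((fun g => G g + 1) \o (fun b => Fimp (FVar (bp b)) (eqblock xp xm b)))
       [seq b <- D | quant_eqb (bq b) Qall && (undup (bX b) != [::])])
      <= sumn (map fc [seq b <- D | quant_eqb (bq b) Qall && (undup (bX b) != [::])]).
    apply: sum_filter_le => b /andP[_ Hn] /=.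
    have := G_eqblock Hn; rewrite /G /fc /=; lia.
  have Hex : forall b : qblock S, ~~ ((quant_eqb (bq b) Qex && (undup (bX b) != [::])) &&
      (quant_eqb (bq b) Qall && (undup (bX b) != [::]))).
    move=> b; case: (bq b) => /=; rewrite ?andbF //.
  have H2 : sumn (map fc [seq b <- D | quant_eqb (bq b) Qex && (undup (bX b) != [::])])
     + sumn (map fc [seq b <- D | quant_eqb (bq b) Qall && (undup (bX b) != [::])])
     <= sumn (map fc D) := sum_filter2 fc D Hex.
  have HT : sumn (map Tb D) = sumn (map (fun b => G (bf b) + 3) D) + sumn (map fc D).
    by rewrite sumn_add; congr sumn; apply: eq_map => b; rewrite /Tb /fc; lia.
  have HGb : G beta = len beta by rewrite /G nvb nbb; lia.
  rewrite HA HGb HT; lia.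
set h := fun y => G (sigmaD D y) - 1.
have Hphi : G phi = len beta + sumn (map h (vars beta)).
  have := G_subst_bool (sigmaD D) Hbool; rewrite Hsub.
  have -> : forall l, sumn (map (fun y => G (sigmaD D y)) l) = sumn (map h l) + size l.
    elim=> //= y l ->; rewrite /h; have := G_pos (sigmaD D y); lia.
  lia.
have Hsub2 : sumn (map h (map (@bp S) D)) <= sumn (map h (vars beta)).
  apply: sumn_uniq_sub => // x /mem_map_bp [b [Hb ->]]; exact: Hin.
have Heq : sumn (map h (map (@bp S) D)) = sumn (map Tb D).
  rewrite -map_comp; apply: sumn_ext_in => b Hb /=.
  by rewrite /h sigma_uniq // /Tb /G /=; lia.
lia.
Qed.
End Main.

Theorem lemma2 (S : signature) (phi beta : form S) (D : seq (qblock S))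
    (xp xm : nat -> nat -> nat) (q : quant) :
  wf phi -> is_decomp phi beta D xp xm ->
  [/\ fequiv (FQ q (Nset D xm) (FQ (dual q) (Pset D xp) (tr q beta D xp xm))) phi,
      depth (tr q beta D xp xm) = (if isbool phi then 0 else depth phi - 1)
    & len (tr Qall beta D xp xm) + 3 * nv (tr Qall beta D xp xm)
        + 6 * nb (tr Qall beta D xp xm)
      <= len phi + 3 * nv phi + 6 * nb phi].
Proof.
move=> _ Hd; split; [exact: sem Hd|exact: depth_part Hd|exact: (len_part Hd)].
Qed.
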